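(* For compiler constructions that are context-free (i.e., may be embedded in a context that reads all locations, so that offset synchronization at every control path join is necessary) and that conform to the principle that every machine code instruction that writes introduces maximal entropy, the entropy of the runtime trace is maximal among all ways of (randomly) varying the embedded constants in the machine code that preserve correctness of the compiled program.
   Context: Setting (encrypted computing with chaotic compilation). A processor computes on encrypted 32-bit words. The compiler is stochastic: recompiling the same source produces machine code and runtime traces of identical structure, differing only in encrypted constants embedded in instructions. At each program point the compiler maintains an obfuscation scheme assigning to every register and memory location $l$ an offset $\Delta l\in\mathbb{Z}/2^{32}$, the plaintext stored in $l$ at runtime being the nominal (programmer-intended) value plus $\Delta l$ mod $2^{32}$; each arithmetic instruction's embedded constant can set the offset of its target location to any value. The trace is the runtime sequence of writes to locations (viewed at the level of plaintexts beneath the encryption), a random variable over recompilations, with entropy $\mathbb{E}[-\log_2 f_T]$ where $f_T$ is its distribution. Correctness forces: copy instructions preserve data exactly, and where control paths join (loop ends, after conditionals, subroutine returns, goto targets) each location's offset must coincide on all joining paths. The principle ''every instruction that writes introduces maximal entropy'' means each arithmetic instruction that writes chooses the new offset of its target uniformly at random and independently of all other choices, subject only to these correctness constraints (the last writes to a location before a join on each path, called trailer instructions, share one common random offset), and input offsets (for locations read before being written) are uniform and independent. *)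

(* Defs.v *)
From HB Require Import structures.
From mathcomp Require Import all_boot all_order all_algebra.
From mathcomp Require Import reals exp.
Set Implicit Arguments. Unset Strict Implicit. Unset Printing Implicit Defensive.
Import Order.TTheory GRing.Theory Num.Theory.
Local Open Scope ring_scope.

(* - [W] : finite type of "offset sources": the arithmetic (writing)
     instructions of the machine code, each of which sets the offset of its
     target via its embedded constant, together with the input locations
     (locations read before being written), whose offsets are also random.
   - [trailer : rel W] : correctness constraints at control-path joins:
     [trailer a b] means a and b are trailer instructions (last writes to one
     location before a join, on joining paths) and so must set the same offset.
   - [n] : length of the runtime trace (number of writes in the run),
     [src i] : the source whose chosen offset is carried (through copy
     instructions, which preserve data exactly) by the i-th write of the trace,
     [nominal i] : the nominal (programmer-intended) value of the i-th write. *)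

Definition wbits : nat := 32%N.
Definition word := 'Z_(2 ^ wbits)%N.

(* an assignment of offsets to all sources = one compilation *)
Definition offsets (W : finType) := {ffun W -> word}.

Definition correct (W : finType) (trailer : rel W) (x : offsets W) : bool :=
  [forall a, forall b, trailer a b ==> (x a == x b)].

Definition trace (W : finType) (n : nat) (nominal : 'I_n -> word)
  (src : 'I_n -> W) (x : offsets W) : {ffun 'I_n -> word} :=
  [ffun i => nominal i + x (src i)].

Definition is_distr (R : realType) (T : finType) (f : {ffun T -> R}) : Prop :=
  (forall t, 0 <= f t) /\ \sum_(t : T) f t = 1.

(* Shannon entropy in bits, E[-log2 f_T] (with 0 log 0 = 0) *)
Definition entropy (R : realType) (T : finType) (f : {ffun T -> R}) : R :=
  \sum_(t : T) f t * (- (ln (f t) / ln 2)).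

Definition trace_distr (R : realType) (W : finType) (n : nat)
  (nominal : 'I_n -> word) (src : 'I_n -> W) (mu : {ffun offsets W -> R})
  : {ffun {ffun 'I_n -> word} -> R} :=
  [ffun t => \sum_(x : offsets W | trace nominal src x == t) mu x].

(* "every instruction that writes introduces maximal entropy": all sources
   choose offsets uniformly and independently, subject only to the correctness
   constraints (trailers share a common random offset), i.e. i.i.d. uniform
   offsets conditioned on correctness = uniform on the correct assignments. *)
Definition maxent_distr (R : realType) (W : finType) (trailer : rel W)
  : {ffun offsets W -> R} :=
  [ffun x => if correct trailer x
             then (#|[pred y | correct trailer y]|%:R)^-1 else 0].

(* Main.v *)
Require Import Defs.
From HB Require Import structures.
From mathcomp Require Import all_boot all_order all_algebra.
From mathcomp Require Import reals exp.
From mathcomp Require Import ring lra.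
Import Order.TTheory GRing.Theory Num.Theory.
Local Open Scope ring_scope.

Section Aux.
Variable R : realType.

Lemma sum_neq0_ex (T : finType) (P : pred T) (F : T -> R) :
  \sum_(x | P x) F x != 0 -> exists x, P x && (F x != 0).
Proof.
move=> H; apply/existsP; apply: contraNT H => /existsPn H.
apply/eqP; apply: big1 => x Px; move: (H x); rewrite Px /=; by move/negPn/eqP.
Qed.

Lemma entropyE (T : finType) (h : {ffun T -> R}) :
  entropy h = (\sum_t h t * - ln (h t)) * (ln 2)^-1.
Proof.
rewrite /entropy big_distrl /=; apply: eq_bigr => t _; rewrite /=; ring.
Qed.

Lemma sum_trace_distr (W : finType) (n : nat) (nominal : 'I_n -> word)
  (src : 'I_n -> W) (mu : {ffun offsets W -> R}) :
  \sum_t trace_distr nominal src mu t = \sum_x mu x.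
Proof.
under eq_bigr do rewrite ffunE big_mkcond.
rewrite exchange_big; apply: eq_bigr => x _.
rewrite (bigD1 (trace nominal src x)) //= eqxx big1 ?addr0 // => t.
by move/negbTE; rewrite eq_sym => ->.
Qed.

Lemma correct_comb (W : finType) (trailer : rel W) (x y z : offsets W) :
  correct trailer x -> correct trailer y -> correct trailer z ->
  correct trailer (x - y + z).
Proof.
move=> /forallP Hx /forallP Hy /forallP Hz; apply/forallP => a; apply/forallP => b.
apply/implyP => tab.
have E (u : offsets W) : (forall a b, trailer a b ==> (u a == u b)) -> u a = u b.
  by move=> /(_ a b); rewrite tab => /eqP.
by rewrite !ffunE (E x) ?(E y) ?(E z) // => c d; [apply: (forallP (Hz c)) | apply: (forallP (Hy c)) | apply: (forallP (Hx c))].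
Qed.

Lemma zmod_aux (V : zmodType) (a b c d : V) :
  a + (b + (c - d)) = a + c -> a + b = a + d.
Proof.
move/addrI => H; congr (_ + _).
by rewrite -[b](addrK (c - d)) H opprB addrC addrNK.
Qed.

Lemma zmod_aux2 (V : zmodType) (a b c d : V) :
  a + b = a + d -> a + (b + (c - d)) = a + c.
Proof. move/addrI => ->; congr (_ + _); by rewrite addrC addrNK. Qed.

Lemma corr_shift (W : finType) (trailer : rel W) (x x0 y0 : offsets W) :
  correct trailer x0 -> correct trailer y0 ->
  correct trailer (x + (x0 - y0)) = correct trailer x.
Proof.
move=> c0 c1; apply/idP/idP => cx.
  have -> : x = x + (x0 - y0) - x0 + y0.
    by rewrite -!addrA (addrC (- x0)) addKr subrr addr0.
  exact: correct_comb.
by rewrite addrC; apply: correct_comb.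
Qed.

Lemma shift (W : finType) (trailer : rel W) (n : nat) (nominal : 'I_n -> word)
  (src : 'I_n -> W) (x0 y0 : offsets W) :
  correct trailer x0 -> correct trailer y0 ->
  trace_distr nominal src (maxent_distr R trailer) (trace nominal src x0) =
  trace_distr nominal src (maxent_distr R trailer) (trace nominal src y0).
Proof.
move=> c0 c1; rewrite !ffunE (reindex_inj (addIr (x0 - y0))) /=.
apply: eq_big => x.
  apply/eqP/eqP => H; apply/ffunP => i; move/ffunP: H => /(_ i); rewrite !ffunE.
    exact: zmod_aux.
  exact: zmod_aux2.
by move=> _; rewrite !ffunE corr_shift.
Qed.

Lemma aux_ineq (a b L M : R) : a * (1 + (L - M)) <= b -> a * - M <= b - a - a * L.
Proof. move=> h; nra. Qed.

End Aux.

Theorem proposition1 (R : realType) (W : finType) (trailer : rel W) (n : nat)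
  (nominal : 'I_n -> word) (src : 'I_n -> W) (mu : {ffun offsets W -> R}) :
  is_distr mu ->
  (forall x : offsets W, mu x != 0 -> correct trailer x) ->
  entropy (trace_distr nominal src mu)
    <= entropy (trace_distr nominal src (maxent_distr R trailer)).
Proof.
move=> [mu0 mu1] supp.
set T := trace nominal src.
set mu' := maxent_distr R trailer.
set g := trace_distr nominal src mu.
set f := trace_distr nominal src mu'.
have c0 : correct trailer (0 : offsets W).
  by apply/forallP=> a; apply/forallP=> b; rewrite !ffunE eqxx implybT.
set K := #|[pred y | correct trailer y]|%:R : R.
have Kpos : 0 < K by rewrite ltr0n; apply/card_gt0P; exists 0.
have mu'E x : mu' x = if correct trailer x then K^-1 else 0 by rewrite ffunE.
have mu'0 x : 0 <= mu' x.
  by rewrite mu'E; case: ifP => _ //; rewrite invr_ge0 ltW.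
have f0 t : 0 <= f t by rewrite ffunE; apply: sumr_ge0 => x _; exact: mu'0.
have g0 t : 0 <= g t by rewrite ffunE; apply: sumr_ge0 => x _; exact: mu0.
have sumg : \sum_t g t = 1 by rewrite sum_trace_distr.
have sumf : \sum_t f t = 1.
  rewrite sum_trace_distr; under eq_bigr do rewrite mu'E.
  rewrite -big_mkcond /= sumr_const -mulr_natr mulVf //.
  by rewrite gt_eqF.
set c := f (T 0).
have cpos : 0 < c.
  rewrite /c ffunE (bigD1 (0 : offsets W)) //=.
  have := mu'E 0; rewrite c0 => ->.
  apply: (@lt_le_trans _ _ K^-1); first by rewrite invr_gt0.
  by rewrite lerDl; apply: sumr_ge0.
have fC t : f t != 0 -> f t = c.
  move=> H; rewrite ffunE in H; case/sum_neq0_ex: H => x /andP [/eqP Tx mx].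
  rewrite -Tx.
  have cx : correct trailer x by move: mx; rewrite mu'E; case: ifP => // _; rewrite eqxx.
  by rewrite /c; apply: shift.
have gC t : g t != 0 -> f t = c.
  move=> H; rewrite ffunE in H; case/sum_neq0_ex: H => x /andP [/eqP Tx mx].
  rewrite -Tx.
  by rewrite /c; apply: shift (supp x mx) c0.
have Ef : entropy f = (- ln c) * (ln 2)^-1.
  rewrite entropyE (eq_bigr (fun t => f t * - ln c)).
    by rewrite -big_distrl /= sumf mul1r.
  by move=> t _; have [->|/fC ->] := eqVneq (f t) 0; rewrite ?mul0r.
have pt t : g t * - ln (g t) <= f t - g t - g t * ln c.
  have [->|gn] := eqVneq (g t) 0.
    by rewrite !mul0r !subr0.
  rewrite (gC t gn).
  have gp : 0 < g t by rewrite lt_def gn g0.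
  have := expR_ge1Dx (ln (c / g t)).
  rewrite lnK ?posrE ?divr_gt0 // ln_div ?posrE // => H.
  have H2 : g t * (c / g t) = c by rewrite mulrC divfK ?gt_eqF.
  have := ler_wpM2l (ltW gp) H; rewrite H2; exact: aux_ineq.
have S : \sum_t g t * - ln (g t) <= \sum_t (f t - g t - g t * ln c).
  by apply: ler_sum => t _; exact: pt.
rewrite !sumrB -big_distrl /= sumf sumg in S.
rewrite entropyE Ef; apply: ler_wpM2r.
  by rewrite invr_ge0 ltW // ln_gt0 // ltr1n.
by rewrite subrr sub0r mul1r in S.
Qed.
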